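(* Let $k\ge2$, let $A=\{a_1,\dots,a_n\}$ be a sorted multiset of positive integers ($a_1\le\dots\le a_n$), and let $\varepsilon\in(0,1)$. Let $c=1+\left\lceil\left(1+\frac1\varepsilon\right)\ln\frac{2(k-1)}{\varepsilon^2}\right\rceil$ and $C=(c+1)(k-1)$. Then $$\mathrm{OPT}(A)\le\min_{k\le j\le n}\mathrm{OPT_L}\bigl(A[j-C+1,j]\bigr)\le(1+\varepsilon)\,\mathrm{OPT}(A).$$
   Context: $[n]=\{1,\dots,n\}$; $\Sigma(S,A)=\sum_{i\in S}a_i$; for pairwise disjoint $S_1,\dots,S_k\subseteq[n]$, $\mathcal{R}(S_1,\dots,S_k,A)=\max_i\Sigma(S_i,A)/\min_i\Sigma(S_i,A)$ if the minimum is positive and $+\infty$ otherwise. $\mathrm{OPT}(A)$ is the minimum ratio over all $k$-tuples of pairwise disjoint subsets of the index set of $A$ (the $k$-SSR problem). $\mathrm{OPT_L}(A)$ is the minimum ratio over such $k$-tuples that additionally contain the largest index (i.e. the largest element of the sorted multiset must belong to some $S_i$; the $k$-SSR$_L$ problem). $A[l,r]$ denotes the sorted multiset consisting of the items $a_i$ with $l\le i\le r$ (so indices below $1$ are simply absent). *)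

(* Defs.v *)
From HB Require Import structures.
From mathcomp Require Import all_boot all_order all_algebra.
From mathcomp Require Import all_classical all_reals all_analysis.
Set Implicit Arguments. Unset Strict Implicit. Unset Printing Implicit Defensive.
Import Order.TTheory GRing.Theory Num.Theory.
Local Open Scope ring_scope.

(* A multiset A = {a_1 <= ... <= a_n} is a sequence A : seq nat; the item a_i
   (1-based) is nth 0 A (i-1), i.e. the 0-based index i-1 : 'I_(size A). *)

Definition Sig (A : seq nat) (S : {set 'I_(size A)}) : nat :=
  (\sum_(x in S) nth 0 A x)%N.

Definition pdisj (k : nat) (A : seq nat) (S : 'I_k -> {set 'I_(size A)}) : Prop :=
  forall i j : 'I_k, i != j -> [disjoint S i & S j].

Definition maxSig (k : nat) (A : seq nat) (S : 'I_k -> {set 'I_(size A)}) : nat :=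
  (\max_(i < k) Sig (S i))%N.
(* min_i Sigma(S_i,A); for k >= 1 this is the minimum (the initial value
   maxSig is an upper bound of all terms, hence does not affect the result) *)
Definition minSig (k : nat) (A : seq nat) (S : 'I_k -> {set 'I_(size A)}) : nat :=
  (\big[minn/maxSig S]_(i < k) Sig (S i))%N.

Definition ratio {R : realType} (k : nat) (A : seq nat)
  (S : 'I_k -> {set 'I_(size A)}) : \bar R :=
  if (0 < minSig S)%N then ((maxSig S)%:R / (minSig S)%:R)%:E else +oo%E.

Definition OPT {R : realType} (k : nat) (A : seq nat) : \bar R :=
  ereal_inf ([set r | exists S : 'I_k -> {set 'I_(size A)},
                       pdisj S /\ r = ratio S])%classic.

Definition OPT_L {R : realType} (k : nat) (A : seq nat) : \bar R :=
  ereal_inf ([set r | exists S : 'I_k -> {set 'I_(size A)},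
    [/\ pdisj S, (exists i : 'I_k, exists x : 'I_(size A),
                     x \in S i /\ (x.+1 = size A)%N) & r = ratio S]])%classic.

(* A[l, r]: the sorted multiset of items a_i with l <= i <= r (1-based,
   indices outside [1,n] simply absent) *)
Definition subA (A : seq nat) (l r : int) : seq nat :=
  [seq nth 0%N A i.-1 | i <- iota 1 (size A) & (l <= i%:Z <= r)%R].

Definition cst_c {R : realType} (k : nat) (eps : R) : nat :=
  (1 + `|Num.ceil ((1 + eps^-1) * ln (2 * (k - 1)%:R / eps ^+ 2))|)%N.
Definition cst_C {R : realType} (k : nat) (eps : R) : nat :=
  ((cst_c k eps + 1) * (k - 1))%N.

Definition windowMin {R : realType} (k : nat) (A : seq nat) (C : nat) : \bar R :=
  ereal_inf ([set OPT_L k (subA A (j%:Z - C%:Z + 1) j%:Z)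
            | j in [set j : nat | (k <= j <= size A)%N]])%classic.

(* Main.v *)
Require Import Defs.
From HB Require Import structures.
From mathcomp Require Import all_boot all_order all_algebra.
From mathcomp Require Import all_classical all_reals all_analysis.
From mathcomp Require Import ring lra zify.
Import Order.TTheory GRing.Theory Num.Theory.
Local Open Scope ring_scope.
Set Implicit Arguments. Unset Strict Implicit.

Lemma ln1p_ge (R : realType) (eps : R) : 0 < eps -> eps / (1 + eps) <= ln (1 + eps).
Proof.
move=> e0.
have h1 : 0 < 1 + eps by lra.
have hx : -1 < - (eps / (1 + eps)).
  rewrite ltrNl opprK ltr_pdivrMr // mul1r; lra.
have := le_ln1Dx hx.
have -> : 1 - eps / (1 + eps) = (1 + eps)^-1 by field; lra.
rewrite lnV ?posrE //; lra.
Qed.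

Lemma pow_bound (R : realType) (k : nat) (eps : R) : (2 <= k)%N -> 0 < eps < 1 ->
  (k-1)%:R * (1+eps)^+2 <= eps^+2 * (1+eps)^+(cst_c k eps).
Proof.
move=> hk /andP[e0 e1].
rewrite /cst_c.
set y := 2 * (k-1)%:R / eps^+2.
set x := (1 + eps^-1) * ln y.
have hk1 : (1 <= (k-1)%:R :> R) by rewrite ler1n; lia.
have he2 : 0 < eps ^+ 2 by rewrite exprn_gt0.
have he2' : eps ^+ 2 < 1 by rewrite expr2; nra.
have hy : 1 <= y.
  rewrite /y ler_pdivlMr // mul1r; lra.
have lny : 0 <= ln y by apply: ln_ge0.
have hx0 : 0 <= x by rewrite /x mulr_ge0 // addr_ge0 // invr_ge0 ltW.
set N := `|Num.ceil x|%N.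
have hN : x <= N%:R.
  rewrite /N natr_absz ger0_norm; first exact: ceil_ge.
  by rewrite ceil_ge0; lra.
have h1 : 0 < 1 + eps by lra.
have hl := @ln1p_ge R eps e0.
have key : ln y <= ln ((1 + eps) ^+ N).
  rewrite lnXn // -mulr_natl.
  apply: le_trans (_ : x * ln (1 + eps) <= _); last first.
    by rewrite ler_wpM2r // ln_ge0 //; lra.
  rewrite /x mulrC mulrA.
  rewrite -{1}(mul1r (ln y)) ler_wpM2r //.
  have -> : (1 + eps^-1) = (1 + eps) / eps by field; lra.
  rewrite mulrA ler_pdivlMr // mul1r.
  have := hl; rewrite ler_pdivrMr //; lra.
have hyN : y <= (1 + eps) ^+ N.
  move: key; rewrite ler_ln // posrE; first lra.
  by rewrite exprn_gt0.
rewrite exprD expr1.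
set P := (1 + eps) ^+ N in hyN *.
have hey : eps ^+ 2 * y = 2 * (k-1)%:R by rewrite /y; field; lra.
have h2 : 2 * (k-1)%:R <= eps ^+ 2 * P.
  by rewrite -hey ler_wpM2l // ltW.
set Q := eps ^+ 2 * P in h2.
have -> : eps ^+ 2 * ((1 + eps) * P) = Q * (1 + eps) by rewrite /Q; ring.
rewrite expr2; nra.
Qed.

Lemma mydisjP (T : finType) (X Y : {set T}) :
  reflect (forall x, x \in X -> x \in Y -> False) [disjoint X & Y].
Proof.
apply: (iffP idP).
- by move=> h x hx hy; rewrite (disjointFr h hx) in hy.
- move=> h; rewrite -setI_eq0; apply/eqP/setP => x; rewrite !inE.
  by apply/negbTE/andP => -[hx hy]; exact: h hx hy.
Qed.

Lemma nth_mono (A : seq nat) i i' : sorted leq A -> (i <= i')%N -> (i' < size A)%N ->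
  (nth 0 A i <= nth 0 A i')%N.
Proof.
move=> hs hii hi'.
apply: (sorted_leq_nth leq_trans leqnn 0 hs) => //; rewrite inE //.
exact: leq_ltn_trans hii hi'.
Qed.

Lemma nth_pos A i : all (fun a => 0 < a)%N A -> (i < size A)%N -> (0 < nth 0 A i)%N.
Proof. by move=> /allP h hi; apply: h; rewrite mem_nth. Qed.

Lemma Sig_ge A (X : {set 'I_(size A)}) x : x \in X -> (nth 0 A x <= Sig X)%N.
Proof. by move=> hx; rewrite /Sig (bigD1 x) //= leq_addr. Qed.

Lemma maxSig_ge k A (S : 'I_k -> {set 'I_(size A)}) i : (Sig (S i) <= maxSig S)%N.
Proof. by rewrite /maxSig (bigD1 i) //= leq_maxl. Qed.

Lemma minSig_le k A (S : 'I_k -> {set 'I_(size A)}) i : (minSig S <= Sig (S i))%N.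
Proof.
have h : forall (r : seq 'I_k) (x : nat), i \in r ->
    (\big[minn/x]_(j <- r) Sig (S j) <= Sig (S i))%N.
  move=> r x; elim: r => // a r IH; rewrite inE big_cons => /orP[/eqP->|/IH h].
  - exact: geq_minl.
  - exact: leq_trans (geq_minr _ _) h.
by rewrite /minSig; apply: h; rewrite mem_index_enum.
Qed.

Lemma minSig_ge (R : realType) k A (S : 'I_k -> {set 'I_(size A)}) (L : R) :
  (0 < k)%N -> (forall i, L <= (Sig (S i))%:R) -> L <= (minSig S)%:R.
Proof.
move=> k0 h. rewrite /minSig. apply: (big_ind (fun x : nat => L <= x%:R)).
- apply: le_trans (h (Ordinal k0)) _. rewrite ler_nat. exact: maxSig_ge.
- move=> x y hx hy. rewrite /minn. by case: ifP.
- move=> i _; exact: h.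
Qed.

Lemma maxSig_le (R : realType) k A (S : 'I_k -> {set 'I_(size A)}) (U : R) :
  0 <= U -> (forall i, (Sig (S i))%:R <= U) -> (maxSig S)%:R <= U.
Proof.
move=> U0 h. rewrite /maxSig. apply: (big_ind (fun x : nat => x%:R <= U)).
- exact: U0.
- move=> x y hx hy. rewrite /maxn. by case: ifP.
- move=> i _; exact: h.
Qed.

Lemma ratio_val (R : realType) k A (S : 'I_k -> {set 'I_(size A)}) :
  (0 < minSig S)%N -> @Defs.ratio R k A S = ((maxSig S)%:R / (minSig S)%:R)%:E.
Proof. by move=> h; rewrite /Defs.ratio h. Qed.

Lemma ratio_le (R : realType) k A (S : 'I_k -> {set 'I_(size A)}) (U L : R) :
  (0 < k)%N -> 0 < L -> (forall i, L <= (Sig (S i))%:R) ->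
  (forall i, (Sig (S i))%:R <= U) ->
  (@Defs.ratio R k A S <= (U / L)%:E)%E.
Proof.
move=> k0 L0 hL hU.
have hm := minSig_ge k0 hL.
have m0 : (0 < minSig S)%N by rewrite -(ltr0n R); exact: lt_le_trans hm.
have U0 : 0 <= U.
  by apply: le_trans (hU (Ordinal k0)); apply: le_trans (ltW L0) (hL _).
have hM := maxSig_le U0 hU.
rewrite ratio_val // lee_fin.
have mpos : 0 < (minSig S)%:R :> R by rewrite ltr0n.
have M0 : 0 <= (maxSig S)%:R :> R by rewrite ler0n.
rewrite ler_pdivrMr // mulrAC ler_pdivlMr //.
apply: ler_pM => //; exact: ltW.
Qed.

Lemma ratio_eq (R : realType) k (A B : seq nat) (S : 'I_k -> {set 'I_(size A)})
  (S' : 'I_k -> {set 'I_(size B)}) :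
  (forall i, Sig (S i) = Sig (S' i)) -> @Defs.ratio R k A S = @Defs.ratio R k B S'.
Proof.
move=> h.
have hM : maxSig S = maxSig S' by rewrite /maxSig; apply: eq_bigr => i _; exact: h.
have hm : minSig S = minSig S' by rewrite /minSig hM; apply: eq_bigr => i _; exact: h.
by rewrite /Defs.ratio hM hm.
Qed.

Lemma Sig_imset (A B : seq nat) (g : 'I_(size B) -> 'I_(size A)) (X : {set 'I_(size B)}) :
  injective g -> (forall p : 'I_(size B), nth 0 B p = nth 0 A (g p)) -> Sig (g @: X) = Sig X.
Proof.
move=> gi hg. rewrite /Sig big_imset /=; last by move=> x y _ _; exact: gi.
by apply: eq_bigr => p _; rewrite hg.
Qed.

Lemma subA_eq A (j C : nat) : (j <= size A)%N ->
  subA A (j%:Z - C%:Z + 1) j%:Z = [seq nth 0 A i | i <- iota (j - C) (j - (j - C))].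
Proof.
move=> hj. rewrite /subA.
have e : iota 1 (size A) = map (addn 1) (iota 0 (size A)) by rewrite -iotaDl.
rewrite e filter_map -map_comp.
have e2 : iota 0 (size A) =
    iota 0 (j - C) ++ iota (j - C) (j - (j - C)) ++ iota j (size A - j).
  rewrite {1}(_ : size A = ((j - C) + ((j - (j - C)) + (size A - j)))%N); last by lia.
  rewrite !iotaD add0n (_ : ((j - C) + (j - (j - C)) = j)%N) //; lia.
rewrite e2 !filter_cat !map_cat.
rewrite (@eq_in_filter _ _ pred0 (iota 0 (j - C))); last first.
  move=> i; rewrite mem_iota => hi /=. apply/negbTE/andP => -[h1 h2]; lia.
rewrite (@eq_in_filter _ _ pred0 (iota j (size A - j))); last first.
  move=> i; rewrite mem_iota => hi /=. apply/negbTE/andP => -[h1 h2]; lia.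
rewrite (@eq_in_filter _ _ predT (iota (j - C) (j - (j - C)))); last first.
  move=> i; rewrite mem_iota => hi /=. apply/andP; split; lia.
rewrite !filter_pred0 filter_predT /= cats0.
by apply: eq_map => i /=.
Qed.

Lemma window_map A (j C : nat) : (j <= size A)%N ->
  exists g : 'I_(size (subA A (j%:Z - C%:Z + 1) j%:Z)) -> 'I_(size A),
   [/\ injective g, (forall p : 'I_(size (subA A (j%:Z - C%:Z + 1) j%:Z)), nth 0 (subA A (j%:Z - C%:Z + 1) j%:Z) p = nth 0 A (g p)),
       (forall p : 'I_(size (subA A (j%:Z - C%:Z + 1) j%:Z)), val (g p) = j - C + p)%N & size (subA A (j%:Z - C%:Z + 1) j%:Z) = (j - (j - C))%N].
Proof.
move=> hj.
have hsz : size (subA A (j%:Z - C%:Z + 1) j%:Z) = (j - (j - C))%N.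
  by rewrite subA_eq // size_map size_iota.
have hg : forall p : 'I_(size (subA A (j%:Z - C%:Z + 1) j%:Z)), (j - C + p < size A)%N.
  by case=> q hq /=; rewrite hsz in hq; lia.
exists (fun p => Ordinal (hg p)); split => //.
- move=> p q /(congr1 val) /= /addnI e; exact: val_inj.
- have hn : forall q, (q < size (subA A (j%:Z - C%:Z + 1) j%:Z))%N ->
      nth 0 (subA A (j%:Z - C%:Z + 1) j%:Z) q = nth 0 A (j - C + q).
    move=> q hq; rewrite hsz in hq.
    by rewrite subA_eq // (nth_map 0) ?nth_iota // size_iota.
  move=> p /=; exact: hn (ltn_ord p).
Qed.

Lemma transfer_down (R : realType) k A (C j : nat) (S : 'I_k -> {set 'I_(size A)}) :
  (j <= size A)%N -> pdisj S ->
  (forall i (x : 'I_(size A)), x \in S i -> (j - C <= x < j)%N) ->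
  (exists i (x : 'I_(size A)), x \in S i /\ x.+1 = j) ->
  (@OPT_L R k (subA A (j%:Z - C%:Z + 1) j%:Z) <= @Defs.ratio R k A S)%E.
Proof.
move=> hj hS hrange [i0 [x0 [hx0 ex0]]].
have [g [gi gn gv hsz]] := window_map C hj.
pose S' i := g @^-1: S i.
have eS : forall i, S i = g @: S' i.
  move=> i; apply/setP => x; apply/idP/imsetP.
  - move=> hx. have := hrange _ _ hx => /andP [h1 h2].
    have hp : (x - (j - C) < size (subA A (j%:Z - C%:Z + 1) j%:Z))%N by rewrite hsz; lia.
    have gx : g (Ordinal hp) = x by apply: val_inj; rewrite gv /=; lia.
    by exists (Ordinal hp) => //; rewrite inE gx.
  - by move=> [p]; rewrite inE => hp ->.
have hS' : pdisj S'.
  move=> i i' /hS /mydisjP hd; apply/mydisjP => p; rewrite !inE => h1 h2.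
  exact: hd h1 h2.
have hsig : forall i, Sig (S i) = Sig (S' i) by move=> i; rewrite {1}eS Sig_imset.
rewrite (ratio_eq R hsig).
apply: ereal_inf_lbound. exists S'; split => //.
exists i0.
have := hrange _ _ hx0 => /andP [h1 h2].
have hp : (j - 1 - (j - C) < size (subA A (j%:Z - C%:Z + 1) j%:Z))%N by rewrite hsz; lia.
have gx : g (Ordinal hp) = x0 by apply: val_inj; rewrite gv /=; lia.
exists (Ordinal hp); split; first by rewrite inE gx.
rewrite /= hsz; lia.
Qed.

Lemma transfer_up (R : realType) k A (C j : nat) :
  (j <= size A)%N -> (@OPT R k A <= @OPT_L R k (subA A (j%:Z - C%:Z + 1) j%:Z))%E.
Proof.
move=> hj.
have [g [gi gn gv hsz]] := window_map C hj.
apply/ereal_infP => _ [S' [hS' _ ->]].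
pose S i := g @: S' i.
have hsig : forall i, Sig (S i) = Sig (S' i) by move=> i; rewrite Sig_imset.
rewrite -(ratio_eq R hsig). apply: ereal_inf_lbound. exists S; split => //.
move=> i i' /hS' hd. rewrite -setI_eq0 -imsetI; last by move=> x y _ _; exact: gi.
by move: hd; rewrite -setI_eq0 => /eqP->; rewrite imset0.
Qed.

Lemma windowMin_le (R : realType) k A C j : (k <= j <= size A)%N ->
  (@windowMin R k A C <= @OPT_L R k (subA A (j%:Z - C%:Z + 1) j%:Z))%E.
Proof. by move=> h; apply: ereal_inf_lbound; exists j. Qed.

Lemma lerM2r' (R : numDomainType) (x y z : R) : 0 <= x -> y <= z -> y * x <= z * x.
Proof. move=> h1 h2; exact: ler_wpM2r. Qed.
Lemma lerM2l' (R : numDomainType) (x y z : R) : 0 <= x -> y <= z -> x * y <= x * z.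
Proof. move=> h1 h2; exact: ler_wpM2l. Qed.

Lemma single_bound (R : realType) k A C j : (0 < k)%N -> (k <= C)%N ->
  all (fun a => 0 < a)%N A -> sorted leq A -> (k <= j <= size A)%N ->
  (@windowMin R k A C <= ((nth 0 A (j-1))%:R / (nth 0 A (j-k))%:R)%:E)%E.
Proof.
move=> k0 kC hp hs /andP[kj jn].
have hg : forall i : 'I_k, (j - 1 - i < size A)%N by move=> i; have := ltn_ord i; lia.
pose S (i : 'I_k) : {set 'I_(size A)} := [set Ordinal (hg i)].
have hS : pdisj S.
  move=> i i' hii'; apply/mydisjP => x; rewrite !inE => /eqP -> /eqP /(congr1 val) /= e.
  move/negP: hii'; apply; apply/eqP/val_inj => /=.
  have := ltn_ord i; have := ltn_ord i'; lia.
have hr : forall i (x : 'I_(size A)), x \in S i -> (j - C <= x < j)%N.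
  move=> i x; rewrite inE => /eqP -> /=; have := ltn_ord i; lia.
have ht : exists i (x : 'I_(size A)), x \in S i /\ x.+1 = j.
  exists (Ordinal k0), (Ordinal (hg (Ordinal k0))); split; first by rewrite inE.
  rewrite /=; lia.
apply: le_trans (windowMin_le R C (j := j) _) _; first by rewrite kj jn.
apply: le_trans (transfer_down R jn hS hr ht) _.
have hL : (0 < nth 0 A (j - k))%N by apply: nth_pos => //; lia.
apply: ratio_le => //; first by rewrite ltr0n.
- move=> i; rewrite /Sig big_set1 ler_nat /=; apply: nth_mono => //;
    have := ltn_ord i; lia.
- move=> i; rewrite /Sig big_set1 ler_nat /=; apply: nth_mono => //;
    have := ltn_ord i; lia.
Qed.

Lemma sum_le_const (F : nat -> nat) m n c :
  (forall x, (m <= x < n)%N -> (F x <= c)%N) -> (\sum_(m <= x < n) F x <= (n - m) * c)%N.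
Proof.
move=> h. rewrite -sum_nat_const_nat big_nat_cond [X in (_ <= X)%N]big_nat_cond.
by apply: leq_sum => x /andP[hx _]; exact: h.
Qed.

Lemma tail_bound (R : realType) k A (eps : R) : (2 <= k)%N -> sorted leq A -> 0 < eps ->
  (forall j', (k <= j' <= size A)%N ->
     (1 + eps) * (nth 0 A (j' - k))%:R < (nth 0 A (j'-1))%:R) ->
  forall i, (i < size A)%N ->
  (\sum_(0 <= x < i.+1) nth 0 A x)%:R <= (k-1)%:R * (1 + eps) / eps * (nth 0 A i)%:R.
Proof.
move=> hk hs e0 G.
have K1 : (k-1)%:R <= (k-1)%:R * (1 + eps) / eps :> R.
  rewrite -mulrA; apply: ler_peMr; first by rewrite ler0n.
  rewrite ler_pdivlMr // mul1r; lra.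
elim/ltn_ind => i IH hi.
have ai0 : 0 <= (nth 0 A i)%:R :> R by rewrite ler0n.
case: (ltnP i.+1 k) => hik.
  apply: le_trans (_ : ((i.+1 - 0) * nth 0 A i)%N%:R <= _).
    rewrite ler_nat; apply: sum_le_const => x hx; apply: nth_mono => //; lia.
  rewrite subn0 natrM.
  apply: le_trans (_ : (k-1)%:R * (nth 0 A i)%:R <= _); last exact: lerM2r' ai0 K1.
  apply: lerM2r' => //; rewrite ler_nat; lia.
set i' := (i.+1 - k)%N.
rewrite (@big_cat_nat _ _ _ i'.+1 0 i.+1) /=; [|lia|lia].
rewrite natrD.
have h1 := IH i' ltac:(lia) ltac:(lia).
have h2 : (\sum_(i'.+1 <= x < i.+1) nth 0 A x <= (k-1) * nth 0 A i)%N.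
  apply: leq_trans (sum_le_const (c := nth 0 A i) _) _.
    move=> x hx; apply: nth_mono => //; lia.
  rewrite (_ : i.+1 - i'.+1 = k - 1)%N //; lia.
have hG := G i.+1 ltac:(lia).
rewrite subSS subn0 in hG.
move: h1 h2 hG.
set a' := (nth 0 A i')%:R. set a := (nth 0 A i)%:R. set q := (k-1)%:R.
set s1 := (\sum_(0 <= x < i'.+1) nth 0 A x)%:R.
set s2 := (\sum_(i'.+1 <= x < i.+1) nth 0 A x).
move=> h1 h2 hG.
have h2' : s2%:R <= q * a by rewrite /q /a -natrM ler_nat.
have h3 : q * (1 + eps) / eps * a' <= q / eps * a.
  have -> : q * (1 + eps) / eps * a' = q / eps * ((1 + eps) * a') by field; lra.
  apply: lerM2l'; last exact: ltW hG.
  by rewrite divr_ge0 ?ler0n // ltW.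
have -> : q * (1 + eps) / eps * a = q / eps * a + q * a by field; lra.
lra.
Qed.

Lemma iter_bound (R : realType) k A (eps : R) (lo c' : nat) : (2 <= k)%N -> 0 < eps ->
  (forall j', (k <= j' <= size A)%N ->
     (1 + eps) * (nth 0 A (j' - k))%:R < (nth 0 A (j'-1))%:R) ->
  (1 <= lo)%N -> (lo + c' * (k-1) <= size A)%N ->
  forall t, (t <= c')%N ->
  (1 + eps) ^+ t * (nth 0 A (lo - 1))%:R <= (nth 0 A (lo - 1 + t * (k-1)))%:R.
Proof.
move=> hk e0 G hlo hn. elim=> [|t IH] ht.
  by rewrite expr0 mul1r mul0n addn0.
have hm : (t.+1 * (k-1) <= c' * (k-1))%N by rewrite leq_mul2r ht orbT.
have e : (t.+1 * (k-1) = (k-1) + t * (k-1))%N by rewrite mulSn.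
have hq : ((k - 1).+1 = k)%N by lia.
move: hm e hn hq; set q := (k - 1)%N; set u := (t.+1 * q)%N; set v := (t * q)%N;
  set w := (c' * q)%N => hm e hn hq.
have hG := G (lo + u)%N ltac:(lia).
have e1 : (lo + u - k = lo - 1 + v)%N by lia.
have e2 : (lo + u - 1 = lo - 1 + u)%N by lia.
rewrite e1 e2 in hG.
rewrite exprS -mulrA.
apply: le_trans (ltW hG).
apply: lerM2l'; first lra.
apply: IH; lia.
Qed.

Lemma real_chain (R : realFieldType) (T a0 P m q eps : R) : 0 < eps -> 0 <= a0 ->
  T <= q * (1 + eps) / eps * a0 -> P * a0 <= m -> q * (1 + eps) ^+ 2 <= eps ^+ 2 * P ->
  T * (1 + eps) <= eps * m.
Proof.
move=> e0 a00 h1 h2 h3.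
have h1' : T * (1 + eps) <= q * (1 + eps) ^+ 2 * (a0 / eps).
  have -> : q * (1 + eps) ^+ 2 * (a0 / eps) = (q * (1 + eps) / eps * a0) * (1 + eps).
    by field; lra.
  apply: lerM2r' => //; lra.
have h2' : q * (1 + eps) ^+ 2 * (a0 / eps) <= eps ^+ 2 * P * (a0 / eps).
  by apply: lerM2r' => //; rewrite divr_ge0 // ltW.
have -> : eps * m = eps ^+ 2 * (m / eps) by field; lra.
apply: le_trans h1' (le_trans h2' _).
have -> : eps ^+ 2 * P * (a0 / eps) = eps ^+ 2 * (P * a0 / eps) by rewrite !mulrA.
apply: lerM2l'; first by rewrite exprn_ge0 // ltW.
by apply: lerM2r' => //; rewrite invr_ge0 ltW.
Qed.

Lemma core (R : realType) k A (eps : R) (S : 'I_k -> {set 'I_(size A)}) :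
  (2 <= k)%N -> all (fun a => 0 < a)%N A -> sorted leq A -> 0 < eps < 1 -> pdisj S ->
  (@windowMin R k A (cst_C k eps) <= (1 + eps)%:E * @Defs.ratio R k A S)%E.
Proof.
move=> hk hp hs he hS.
have /andP[e0 e1] := he.
have k0 : (0 < k)%N by lia.
have c1 : (1 <= cst_c k eps)%N by rewrite /cst_c; lia.
have hC : cst_C k eps = ((cst_c k eps + 1) * (k - 1))%N by [].
move: hC c1; set C := cst_C k eps; set c := cst_c k eps => hC c1.
have kC : (k <= C)%N.
  rewrite hC; apply: leq_trans (_ : (2 * (k - 1) <= _)%N); first lia.
  by rewrite leq_mul2r; apply/orP; right; lia.
case m0: (0 < minSig S)%N; last first.
  rewrite /Defs.ratio m0 mulry gtr0_sg ?mul1e ?leey //; lra.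
set M := maxSig S. set m := minSig S.
have hnz : forall i, exists x, x \in S i.
  move=> i. have : (0 < Sig (S i))%N by apply: leq_trans m0 (minSig_le _ _).
  rewrite /Sig. case: (set_0Vmem (S i)) => [->|[x hx]]; first by rewrite big_set0.
  by exists x.
set U := \bigcup_(i < k) S i.
have [x00 hx00] := hnz (Ordinal k0).
have U0 : (0 < #|U|)%N.
  apply/card_gt0P. exists x00. apply/bigcupP. by exists (Ordinal k0).
have [xm hxmU hxmax] := eq_bigmax_cond (fun x : 'I_(size A) => val x) U0.
have hle : forall i x, x \in S i -> (val x <= val xm)%N.
  move=> i x hx. rewrite -hxmax.
  have hxU : x \in U by apply/bigcupP; exists i.
  exact: (leq_bigmax_cond _ hxU).
have [i1 _ hxm1] := bigcupP hxmU.
set j := (val xm).+1.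
have jn : (j <= size A)%N := ltn_ord xm.
have kj : (k <= j)%N.
  pose f (i : 'I_k) : 'I_(size A) := odflt xm [pick x in S i].
  have hf : forall i, f i \in S i.
    move=> i; rewrite /f; case: pickP => [x hx|hn] //=.
    by have [x hx] := hnz i; rewrite hn in hx.
  have hfj : forall i, (f i < j)%N by move=> i; rewrite ltnS; exact: hle (hf i).
  pose h (i : 'I_k) : 'I_j := Ordinal (hfj i).
  have hi : injective h.
    move=> i i' /(congr1 val) /= /val_inj e.
    case: (eqVneq i i') => // /hS /mydisjP hd; exfalso.
    by apply: (hd (f i) (hf i)); rewrite e; exact: hf.
  by have := leq_card h hi; rewrite !card_ord.
have hMa : (nth 0 A xm <= M)%N := leq_trans (Sig_ge hxm1) (maxSig_ge _ i1).
have mpos : 0 < m%:R :> R by rewrite ltr0n.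
have Mm : (m <= M)%N := leq_trans (minSig_le S (Ordinal k0)) (maxSig_ge S _).
have r1 : 1 <= M%:R / m%:R :> R by rewrite ler_pdivlMr // mul1r ler_nat.
have hrat : Defs.ratio S = (M%:R / m%:R)%:E :> \bar R by rewrite /Defs.ratio m0.
rewrite hrat -EFinM.
have hr1 : M%:R / m%:R <= (1 + eps) * (M%:R / m%:R) :> R.
  rewrite -{1}(mul1r (M%:R / m%:R)); apply: lerM2r'; lra.
case hA: (m < nth 0 A (j - k))%N.
  apply: le_trans (single_bound R k0 kC hp hs (j := j) _) _; first by rewrite kj jn.
  rewrite lee_fin; apply: le_trans hr1.
  have -> : (j - 1 = val xm)%N by rewrite /j; lia.
  have hL : (0 < nth 0 A (j - k))%N by apply: leq_ltn_trans hA.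
  rewrite ler_pdivrMr ?ltr0n // mulrAC ler_pdivlMr //.
  apply: ler_pM; rewrite ?ler0n ?ler_nat //; exact: ltnW.
have hmA : (nth 0 A (j - k) <= m)%N by rewrite leqNgt hA.
case: (boolP [exists j' : 'I_(size A).+1, (k <= j')%N &&
   ((nth 0 A (j' - 1))%:R <= (1 + eps) * (nth 0 A (j' - k))%:R :> R)]).
  move=> /existsP [j' /andP [hj'k hj'le]].
  have hj'n : (j' <= size A)%N by rewrite -ltnS.
  apply: le_trans (single_bound R k0 kC hp hs (j := j') _) _; first by rewrite hj'k hj'n.
  rewrite lee_fin.
  have hL : (0 < nth 0 A (j' - k))%N by apply: nth_pos => //; lia.
  rewrite ler_pdivrMr ?ltr0n //.
  apply: le_trans hj'le _.
  apply: lerM2r'; first by rewrite ler0n.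
  rewrite -{1}(mulr1 (1 + eps)); apply: lerM2l' => //; lra.
rewrite negb_exists => /forallP hnb.
have G : forall j', (k <= j' <= size A)%N ->
     (1 + eps) * (nth 0 A (j' - k))%:R < (nth 0 A (j'-1))%:R :> R.
  move=> j' /andP[h1 h2].
  have := hnb (Ordinal (_ : (j' < (size A).+1)%N)).
  rewrite /= h1 /= -ltNge; apply; lia.
set lo := (j - C)%N.
pose S' i := S i :&: [set x : 'I_(size A) | (lo <= x)%N].
have hS' : pdisj S'.
  move=> i i' /hS /mydisjP hd; apply/mydisjP => x; rewrite !inE => /andP[h1 _] /andP[h2 _].
  exact: hd h1 h2.
have hr : forall i (x : 'I_(size A)), x \in S' i -> (j - C <= x < j)%N.
  move=> i x; rewrite !inE => /andP[hx hlo]. rewrite hlo /= ltnS; exact: hle hx.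
have ht : exists i (x : 'I_(size A)), x \in S' i /\ x.+1 = j.
  exists i1, xm; split => //. rewrite !inE hxm1 /= /lo /j.
  have hv : \val xm = nat_of_ord xm by [].
  rewrite hv; lia.
apply: le_trans (windowMin_le R C (j := j) _) _; first by rewrite kj jn.
apply: le_trans (transfer_down R jn hS' hr ht) _.
set T := (\sum_(0 <= x < lo) nth 0 A x)%N.
have hsplit : forall i, (Sig (S i) <= Sig (S' i) + T)%N.
  move=> i. rewrite /Sig (bigID (fun x : 'I_(size A) => (lo <= x)%N)) /=.
  have -> : \sum_(x in S i | (lo <= x)%N) nth 0 A x = \sum_(x in S' i) nth 0 A x.
    by apply: eq_bigl => x; rewrite !inE.
  rewrite leq_add2l /T big_mkord (big_ord_widen (size A)); last by rewrite /lo; lia.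
  rewrite big_mkcond [X in (_ <= X)%N]big_mkcond; apply: leq_sum => x _.
  case: (x \in S i) => //=; rewrite -ltnNge; case: ifP => _ //; exact: leqnn.
have hsub : forall i, (Sig (S' i) <= Sig (S i))%N.
  move=> i; rewrite /Sig big_mkcond [X in (_ <= X)%N]big_mkcond; apply: leq_sum => x _.
  rewrite !inE; case: (x \in S i) => //=; case: ifP => _ //; exact: leqnn.
have hT : (T%:R * (1 + eps) <= eps * m%:R :> R).
  case: (posnP lo) => hlo.
    rewrite /T hlo big_geq // mul0r; exact: mulr_ge0 (ltW e0) (ler0n _ _).
  have hC' : C = (c * (k-1) + (k-1))%N by rewrite hC mulnDl mul1n.
  move: hC'; set w := (c * (k-1))%N => hC'.
  have [f1 f2 f3] : [/\ (lo.-1 < size A)%N, (lo + w <= size A)%N & (lo - 1 + w = j - k)%N].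
    move: hlo hC' jn hk; rewrite /lo; move: (j) (C) (w) (size A) => j0 C0 w0 n0.
    clear => *; split; lia.
  have ha := @tail_bound R k A eps hk hs e0 G lo.-1 f1.
  rewrite prednK // -subn1 in ha.
  have hit := @iter_bound R k A eps lo c hk e0 G hlo f2 c (leqnn c).
  rewrite -/w f3 in hit.
  have hpb := @pow_bound R k eps hk he.
  apply: (real_chain e0 _ ha _ hpb); first by rewrite ler0n.
  apply: le_trans hit _; by rewrite ler_nat.
apply: le_trans (ratio_le (U := M%:R) (L := m%:R / (1 + eps)) k0 _ _ _) _.
- by rewrite divr_gt0 //; lra.
- move=> i.
  have h1 := hsplit i. have h2 := minSig_le S i.
  have h3 : m%:R <= (Sig (S' i))%:R + T%:R :> R.
    by rewrite -natrD ler_nat; apply: leq_trans h2 h1.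
  rewrite ler_pdivrMr; last lra.
  nra.
- move=> i; rewrite ler_nat; apply: leq_trans (hsub i) (maxSig_ge _ _).
rewrite lee_fin.
have -> : M%:R / (m%:R / (1 + eps)) = (1 + eps) * (M%:R / m%:R) :> R.
  by field; apply/andP; split; [rewrite gt_eqF | lra].
by [].
Qed.

Unset Implicit Arguments.

Theorem lemma26 (R : realType) (k : nat) (A : seq nat) (eps : R) :
  (2 <= k)%N -> all (fun a => 0 < a)%N A -> sorted leq A ->
  0 < eps < 1 ->
  (@OPT R k A <= @windowMin R k A (cst_C k eps) /\
   @windowMin R k A (cst_C k eps) <= (1 + eps)%:E * @OPT R k A)%E.
Proof.
move=> hk hp hs he. have /andP[e0 e1] := he. split.
- apply/ereal_infP => _ [j /andP[_ jn] <-]. exact: transfer_up.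
- rewrite -lee_pdivrMl; last lra.
  apply/ereal_infP => _ [S [hS ->]]. rewrite lee_pdivrMl; last lra.
  exact: core.
Qed.
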